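(* Let $n\ge 2$ and $x\in\mathbb{C}$. Then, as formal power series in $z$, $$M_{xJ_n+B_n}(z)=\frac{nxz\,\frac{d}{dz}\big(z\tilde M_{B_n}(z)\big)}{1-nxz\,\tilde M_{B_n}(z)}+M_{B_n}(z).$$
   Context: $J_n$ is the $n\times n$ all-ones matrix, and $B_n=i\,M$ where $M$ is the $n\times n$ matrix with zero diagonal, entries $1$ above and $-1$ below the diagonal. For an $n\times n$ matrix $C$, $M_C(z)=\operatorname{Tr}((I-zC)^{-1})=\sum_{m\ge0}\operatorname{Tr}(C^m)z^m$. Define the state $\omega(C)=\frac1n\sum_{i,j=1}^n c_{ij}$ for $C=[c_{ij}]$, and $\tilde M_{B_n}(z)=\omega((I-zB_n)^{-1})=\sum_{m\ge0}\omega(B_n^m)z^m$. *)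

(* Defs.v *)
From HB Require Import structures.
From mathcomp Require Import all_boot all_order all_algebra.
From mathcomp Require Import complex.
Set Implicit Arguments. Unset Strict Implicit. Unset Printing Implicit Defensive.
Import Order.TTheory GRing.Theory Num.Theory.
Local Open Scope ring_scope.

(* Formal power series over a ring C are represented by their coefficient
   sequences  nat -> C  (coefficient of z^m at index m). *)
Definition fps (C : Type) := nat -> C.

Section FPS.
Variable C : comRingType.

Definition fps_mul (f g : fps C) : fps C :=
  fun m => \sum_(i < m.+1) f i * g (m - i)%N.

Definition fps_one : fps C := fun m => if m is 0 then 1 else 0.

Fixpoint fps_pow (f : fps C) (k : nat) : fps C :=
  if k is k'.+1 then fps_mul f (fps_pow f k') else fps_one.

Definition fps_mulz (f : fps C) : fps C :=
  fun m => if m is m'.+1 then f m' else 0.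

Definition fps_scale (a : C) (f : fps C) : fps C := fun m => a * f m.

Definition fps_add (f g : fps C) : fps C := fun m => f m + g m.

Definition fps_deriv (f : fps C) : fps C := fun m => f m.+1 *+ m.+1.

(* For u with zero constant term, the formal inverse of (1 - u), i.e.
   1/(1-u) = sum_k u^k (only k <= m contribute to the coefficient of z^m). *)
Definition fps_inv_1m (u : fps C) : fps C :=
  fun m => \sum_(k < m.+1) fps_pow u k m.

End FPS.

Section Mats.
Variable R : rcfType.
Local Notation C := R[i].

Definition Jmx (n : nat) : 'M[C]_n := const_mx 1.

Definition Bmx (n : nat) : 'M[C]_n :=
  \matrix_(i < n, j < n)
     ('i * (if (i < j)%N then 1 else if (j < i)%N then -1 else 0)).

Definition omega (n : nat) (A : 'M[C]_n) : C :=
  n%:R^-1 * \sum_(i < n) \sum_(j < n) A i j.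

(* M_A(z) = Tr((I - zA)^{-1}) = sum_m Tr(A^m) z^m *)
Definition Mser (n : nat) (A : 'M[C]_n) : fps C := fun m => \tr (A ^+ m).

(* tilde M_A(z) = omega((I - zA)^{-1}) = sum_m omega(A^m) z^m *)
Definition Mtil (n : nat) (A : 'M[C]_n) : fps C := fun m => omega (A ^+ m).

End Mats.

(* Main.v *)
Require Import Defs.
From HB Require Import structures.
From mathcomp Require Import all_boot all_order all_algebra.
From mathcomp Require Import complex zify.
From Stdlib Require FunctionalExtensionality.
Import Order.TTheory GRing.Theory Num.Theory.
Local Open Scope ring_scope.

Lemma sum_trunc (C : nmodType) (F : nat -> C) (N M : nat) :
  (N <= M)%N -> (forall k, (N <= k)%N -> F k = 0) ->
  \sum_(k < M) F k = \sum_(k < N) F k.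
Proof.
move=> hNM hF; rewrite (big_ord_widen _ _ hNM) [RHS]big_mkcond /=.
by apply: eq_bigr => i _; case: ifP => // /negbT; rewrite -leqNgt => /hF.
Qed.
Lemma tri_sum (C : nmodType) (f : nat -> C) m :
  \sum_(k < m) \sum_(l < (m - k)%N) f (k + l)%N = \sum_(q < m) f q *+ q.+1.
Proof.
elim: m => [|m IH]; first by rewrite !big_ord0.
have E : forall k : 'I_m.+1, \sum_(l < (m.+1 - k)%N) f (k + l)%N =
   \sum_(l < (m - k)%N) f (k + l)%N + f m.
  move=> k; have -> : (m.+1 - k = (m - k).+1)%N.
    by move: (ltn_ord k); move: (nat_of_ord k) => j; lia.
  rewrite big_ord_recr /=; congr (_ + f _).
  by move: (ltn_ord k); move: (nat_of_ord k) => j; lia.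
rewrite (eq_bigr _ (fun k _ => E k)) big_split /= sumr_const card_ord.
rewrite big_ord_recr /= subnn big_ord0 addr0 [RHS]big_ord_recr /=.
by rewrite -IH.
Qed.
Lemma pow_low (C : comRingType) (u : fps C) k m :
  u 0%N = 0 -> (m < k)%N -> fps_pow u k m = 0.
Proof.
move=> u0; elim: k m => [//|k IH] m hm /=.
rewrite /fps_mul big1 // => i _.
case: (posnP i) => [->|hi]; first by rewrite u0 mul0r.
rewrite IH ?mulr0 //.
move: hi (ltn_ord i); move: (nat_of_ord i) => j; lia.
Qed.

Lemma inv_1m_eq (C : comRingType) (u : fps C) m :
  u 0%N = 0 ->
  fps_inv_1m u m = fps_one C m + \sum_(i < m.+1) u i * fps_inv_1m u (m - i)%N.
Proof.
move=> u0; rewrite /fps_inv_1m big_ord_recl /=; congr (_ + _).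
under eq_bigr do rewrite /fps_mul.
rewrite exchange_big /=; apply: eq_bigr => i _.
rewrite -mulr_sumr; case: (posnP i) => [->|hi]; first by rewrite u0 !mul0r.
congr (_ * _).
rewrite (@sum_trunc _ (fun k => fps_pow u k (m - i)%N) (m - i)%N.+1 m) //.
  by move: hi (ltn_ord i); move: (nat_of_ord i) => j; lia.
by move=> k hk; apply: pow_low => //; lia.
Qed.
Lemma expand_r (T : pzRingType) (a b : T) m :
  (a + b) ^+ m = a ^+ m + \sum_(k < m) (a + b) ^+ (m.-1 - k)%N * b * a ^+ k.
Proof.
elim: m => [|m IH]; first by rewrite !expr0 big_ord0 addr0.
rewrite exprSr mulrDr {1}IH mulrDl -exprSr big_ord_recl /= subn0 expr0 mulr1.
rewrite mulr_suml -addrA; congr (_ + _); rewrite addrC; congr (_ + _).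
apply: eq_bigr => i _; rewrite -!mulrA -exprSr /=; congr (_ ^+ _ * _).
by rewrite /bump leq0n add1n; move: (nat_of_ord i) => j; lia.
Qed.

Lemma expand_l (T : pzRingType) (a b : T) m :
  (a + b) ^+ m = a ^+ m + \sum_(k < m) a ^+ k * b * (a + b) ^+ (m.-1 - k)%N.
Proof.
elim: m => [|m IH]; first by rewrite !expr0 big_ord0 addr0.
rewrite exprS mulrDl {1}IH mulrDr -exprS big_ord_recl /= subn0 expr0 mul1r.
rewrite mulr_sumr -addrA; congr (_ + _); rewrite addrC; congr (_ + _).
apply: eq_bigr => i _; rewrite !mulrA -exprS /=; congr (_ * _ ^+ _).
by rewrite /bump leq0n add1n; move: (nat_of_ord i) => j; lia.
Qed.
Section M.
Variable R : rcfType.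
Variable n : nat.
Local Notation C := R[i].

Definition sm (X : 'M[C]_n) : C := \sum_(i < n) \sum_(j < n) X i j.

Lemma smD X Y : sm (X + Y) = sm X + sm Y.
Proof.
rewrite /sm -big_split /=; apply: eq_bigr => i _.
by rewrite -big_split /=; apply: eq_bigr => j _; rewrite mxE.
Qed.

Lemma smZ a X : sm (a *: X) = a * sm X.
Proof.
rewrite /sm mulr_sumr; apply: eq_bigr => i _.
by rewrite mulr_sumr; apply: eq_bigr => j _; rewrite mxE.
Qed.

Lemma sm_sum m (F : 'I_m -> 'M[C]_n) : sm (\sum_(l < m) F l) = \sum_(l < m) sm (F l).
Proof.
rewrite /sm; under eq_bigr do under eq_bigr do rewrite summxE.
under eq_bigr do rewrite exchange_big /=.
by rewrite exchange_big.
Qed.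

Lemma smJ X Y : sm (X *m Jmx R n *m Y) = sm X * sm Y.
Proof.
rewrite /sm mulr_suml.
apply: eq_bigr => i _; rewrite mulr_sumr.
under eq_bigr do rewrite mxE.
under eq_bigr do under eq_bigr do rewrite mxE.
under eq_bigr do under eq_bigr do under eq_bigr do rewrite mxE mulr1.
rewrite exchange_big /=; apply: eq_bigr => p _.
by rewrite mulr_sumr.
Qed.

Lemma trJ Z : \tr (Z *m Jmx R n) = sm Z.
Proof.
rewrite /sm /mxtrace; apply: eq_bigr => i _.
by rewrite mxE; apply: eq_bigr => j _; rewrite mxE mulr1.
Qed.


Variable hn : (2 <= n)%N.
Variable x : C.
Let B := Bmx R n.
Let A := x *: Jmx R n + B.
Let s k := sm (B ^+ k).
Let u := fps_scale (n%:R * x) (fps_mulz (Mtil B)).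
Let G := fps_inv_1m u.

Lemma AE : A = B + x *: Jmx R n.
Proof. by rewrite /A addrC. Qed.

Lemma nMt k : n%:R * Mtil B k = s k.
Proof.
rewrite /Mtil /omega mulrA mulfV ?mul1r // pnatr_eq0.
by move: hn; case: n.
Qed.

Lemma u0 : u 0%N = 0.
Proof. by rewrite /u /fps_scale /= mulr0. Qed.

Lemma G0 : G 0%N = 1.
Proof. by rewrite /G /fps_inv_1m big_ord1. Qed.

Lemma GS t : G t.+1 = x * \sum_(p < t.+1) s p * G (t - p)%N.
Proof.
rewrite /G (@inv_1m_eq _ u t.+1 u0) // big_ord_recl u0 mul0r add0r /= add0r.
rewrite mulr_sumr; apply: eq_bigr => p _.
rewrite /bump leq0n add1n subSS -/G.
rewrite /u /fps_scale /fps_mulz -nMt.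
by rewrite !mulrA (mulrC n%:R x).
Qed.

Lemma V_eq j k : sm (B ^+ k * A ^+ j) = \sum_(l < j.+1) s (k + l)%N * G (j - l)%N.
Proof.
elim/ltn_ind: j k => j IH k.
rewrite [A]AE expand_l -AE mulrDr smD -exprD mulr_sumr sm_sum.
rewrite big_ord_recr /= subnn G0 mulr1 addrC; congr (_ + _).
apply: eq_bigr => l _.
rewrite !mulrA -exprD -!mulmxE -scalemxAr -scalemxAl smZ smJ.
have hl := ltn_ord l.
have -> : (j - l = (j.-1 - l).+1)%N by move: hl; move: (nat_of_ord l) => q; lia.
rewrite GS.
have hlt : (j.-1 - l < j)%N by move: hl; move: (nat_of_ord l) => q; lia.
have := IH (j.-1 - l)%N hlt 0%N; rewrite expr0 mul1r => ->.
by rewrite mulrCA.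
Qed.

Lemma tr_sum m (F : 'I_m -> 'M[C]_n) : \tr (\sum_(l < m) F l) = \sum_(l < m) \tr (F l).
Proof. by rewrite raddf_sum. Qed.

Lemma main_coef m :
  Mser A m = fps_add (fps_mul (fps_scale (n%:R * x)
     (fps_mulz (fps_deriv (fps_mulz (Mtil B))))) G) (Mser B) m.
Proof.
rewrite /Mser /fps_add addrC [A]AE expand_r -AE mxtraceD; congr (_ + _).
rewrite tr_sum.
under eq_bigr => k _ do rewrite -!mulmxE -scalemxAr -scalemxAl mxtraceZ
  mxtrace_mulC mulmxA trJ mulmxE V_eq.

rewrite -mulr_sumr.
pose f q := s q * G (m.-1 - q)%N.
have E : forall k : 'I_m, \sum_(l < (m.-1 - k).+1) s (k + l)%N * G (m.-1 - k - l)%N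
   = \sum_(l < m - k) f (k + l)%N.
  move=> k; have -> : ((m.-1 - k).+1 = m - k)%N.
    by move: (ltn_ord k); move: (nat_of_ord k) => q; lia.
  by apply: eq_bigr => l _; rewrite /f subnDA.
rewrite (eq_bigr _ (fun k _ => E k)) tri_sum.
rewrite /fps_mul big_ord_recl /=.
have z0 : forall D, fps_scale (n%:R * x) (fps_mulz D) 0%N = 0.
  by move=> D; rewrite /fps_scale /= mulr0.
rewrite z0 mul0r add0r mulr_sumr; apply: eq_bigr => i _.
rewrite /bump leq0n add1n.
have -> : (m - i.+1 = m.-1 - i)%N.
  by move: (ltn_ord i); move: (nat_of_ord i) => q; lia.
rewrite /fps_scale /fps_mulz /fps_deriv /= /f -nMt.
rewrite !(mulrnAr, mulrnAl); congr (_ *+ _).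
by rewrite !mul1r !mulrA.
Qed.

End M.

Theorem lemma4p3 (R : rcfType) (n : nat) (hn : (2 <= n)%N) (x : R[i]) :
  Mser (x *: Jmx R n + Bmx R n) =
  fps_add
    (fps_mul
       (fps_scale (n%:R * x) (fps_mulz (fps_deriv (fps_mulz (Mtil (Bmx R n))))))
       (fps_inv_1m (fps_scale (n%:R * x) (fps_mulz (Mtil (Bmx R n))))))
    (Mser (Bmx R n)).
Proof.
apply: FunctionalExtensionality.functional_extensionality => m.
exact: (@main_coef R n hn x m).
Qed.
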